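(* Let $A$ be an alphabet. For all words $\mathbf a,\mathbf b,\mathbf c,\mathbf d\in A^\ast$, in the algebra $(A^\ast,\cdot,A^\ast)$: $$\mathbf a:\mathbf b::_m\mathbf c:\mathbf d\iff \exists\,\mathbf a_1,\mathbf a_2,\mathbf a_3,\mathbf b_1,\mathbf b_2,\mathbf b_3\in A^\ast:\ \mathbf a=\mathbf a_1\mathbf a_2\mathbf a_3,\ \mathbf b=\mathbf b_1\mathbf a_2\mathbf b_3,\ \mathbf c=\mathbf a_1\mathbf b_2\mathbf a_3,\ \mathbf d=\mathbf b_1\mathbf b_2\mathbf b_3.$$
   Context: $(A^\ast,\cdot,A^\ast)$ is the algebra whose universe is the set $A^\ast$ of all finite words over $A$ (including the empty word $\varepsilon$), with concatenation as binary operation and every word as a constant. A justification is a pair of terms $s\to t$ with the variables of $t$ among those of $s$; monolinear justifications are those where $s,t$ contain only one fixed variable $x$, occurring at most once in $s$ and at most once in $t$. $\uparrow^m(\mathbf a\to\mathbf b)$ is the set of monolinear justifications $s\to t$ with $\mathbf a=s(\mathbf o)$, $\mathbf b=t(\mathbf o)$ for some value $\mathbf o$ of $x$; $\uparrow^m(\mathbf a\to\mathbf b:\!\cdot\,\mathbf c\to\mathbf d):=\uparrow^m(\mathbf a\to\mathbf b)\cap\uparrow^m(\mathbf c\to\mathbf d)$. A monolinear justification is trivial if it lies in all sets $\uparrow^m(\mathbf a'\to\mathbf b':\!\cdot\,\mathbf c'\to\mathbf d')$. $\mathbf a\to\mathbf b:\!\cdot_m\,\mathbf c\to\mathbf d$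 holds iff either (i) all justifications in $\uparrow^m(\mathbf a\to\mathbf b)\cup\uparrow^m(\mathbf c\to\mathbf d)$ are trivial, or (ii) $J_{\mathbf d}:=\uparrow^m(\mathbf a\to\mathbf b:\!\cdot\,\mathbf c\to\mathbf d)$ contains a non-trivial justification and for every $\mathbf d'$, $J_{\mathbf d}\subseteq J_{\mathbf d'}$ implies $J_{\mathbf d'}$ contains a non-trivial justification and $J_{\mathbf d'}\subseteq J_{\mathbf d}$ (ignoring trivial justifications). $\mathbf a:\mathbf b::_m\mathbf c:\mathbf d$ iff $\mathbf a\to\mathbf b:\!\cdot_m\,\mathbf c\to\mathbf d$, $\mathbf b\to\mathbf a:\!\cdot_m\,\mathbf d\to\mathbf c$, $\mathbf c\to\mathbf d:\!\cdot_m\,\mathbf a\to\mathbf b$, $\mathbf d\to\mathbf c:\!\cdot_m\,\mathbf b\to\mathbf a$ all hold. *)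

(* Defs.v *)
From mathcomp Require Import all_boot.
Set Implicit Arguments. Unset Strict Implicit. Unset Printing Implicit Defensive.

Section Word.
Variable A : Type.

(* Terms of the algebra (A-star, concatenation, A-star) in the single variable x:
   the variable, a constant (any word), or a concatenation. *)
Inductive term : Type :=
| Var : term
| Cst : seq A -> term
| Cat : term -> term -> term.

Fixpoint occ (t : term) : nat :=
  match t with
  | Var => 1
  | Cst _ => 0
  | Cat s u => occ s + occ u
  end.

Fixpoint eval (t : term) (o : seq A) : seq A :=
  match t with
  | Var => o
  | Cst w => w
  | Cat s u => eval s o ++ eval u o
  end.

Definition justification := (term * term)%type.

Definition monolinear (j : justification) : Prop :=
  occ j.1 <= 1 /\ occ j.2 <= 1 /\ (0 < occ j.2 -> 0 < occ j.1).

Definition up_m (a b : seq A) (j : justification) : Prop :=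
  monolinear j /\ exists o, a = eval j.1 o /\ b = eval j.2 o.

Definition up_m2 (a b c d : seq A) (j : justification) : Prop :=
  up_m a b j /\ up_m c d j.

Definition trivial_just (j : justification) : Prop :=
  monolinear j /\ forall a' b' c' d', up_m2 a' b' c' d' j.

Definition arrow_m (a b c d : seq A) : Prop :=
  (forall j, up_m a b j \/ up_m c d j -> trivial_just j)
  \/
  ((exists j, up_m2 a b c d j /\ ~ trivial_just j) /\
   forall d' : seq A,
     (forall j, up_m2 a b c d j -> ~ trivial_just j -> up_m2 a b c d' j) ->
     (exists j, up_m2 a b c d' j /\ ~ trivial_just j) /\
     (forall j, up_m2 a b c d' j -> ~ trivial_just j -> up_m2 a b c d j)).

Definition prop_m (a b c d : seq A) : Prop :=
  arrow_m a b c d /\ arrow_m b a d c /\ arrow_m c d a b /\ arrow_m d c b a.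

End Word.

(* Main.v *)
Require Import Defs.
From mathcomp Require Import all_boot.

Section Aux.
Variable A : Type.

Lemma catsI_ (p x y : seq A) : p ++ x = p ++ y -> x = y.
Proof. by elim: p => //= h p IH [] /IH. Qed.

Lemma catIs_ (p x y : seq A) : x ++ p = y ++ p -> x = y.
Proof.
move/(f_equal rev); rewrite !rev_cat => /catsI_ /(f_equal rev).
by rewrite !revK.
Qed.

Lemma eval_occ0 (t : term A) o : occ t = 0 -> eval t o = eval t [::].
Proof.
elim: t => //= s IHs u IHu /eqP; rewrite addn_eq0 => /andP[/eqP h1 /eqP h2].
by rewrite IHs // IHu.
Qed.

Lemma eval_occ1 (t : term A) : occ t = 1 -> exists u v, forall o, eval t o = u ++ o ++ v.
Proof.
elim: t => /=.
- by move=> _; exists [::], [::] => o; rewrite cats0.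
- by [].
- move=> s IHs t IHt.
  case Hs: (occ s) => [|[|k]]; case Ht: (occ t) => [|[|l]] //= _.
  + have [u [v E]] := IHt Ht.
    exists (eval s [::] ++ u), v => o; by rewrite E (@eval_occ0 s o Hs) -!catA.
  + have [u [v E]] := IHs Hs.
    exists u, (v ++ eval t [::]) => o; by rewrite E (@eval_occ0 t o Ht) -!catA.
Qed.

Lemma size_eval (t : term A) o :
  size (eval t o) = size (eval t [::]) + occ t * size o.
Proof.
elim: t => /= [|w|s IHs t IHt]; first by rewrite mul1n.
  by rewrite mul0n addn0.
rewrite !size_cat IHs IHt mulnDl -!addnA; congr (_ + _); exact: addnCA.
Qed.

Lemma no_trivial (z : A) (j : justification A) : ~ trivial_just j.
Proof.
case: j => s t [[Hs [Ht Hst]] T].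
have [[_ [o1 [E1 F1]]] _] := T [::] [::] [::] [::].
have [[_ [o2 [E2 F2]]] _] := T [::] [:: z] [::] [::].
simpl in Hs, Ht, Hst, E1, F1, E2, F2.
have [Hs0|Hs1] : occ s = 0 \/ occ s = 1.
  by case: (occ s) Hs => [|[|]]; auto.
- have Ht0 : occ t = 0.
    by case: (occ t) Hst => // n /(_ erefl); rewrite Hs0.
  move: F2; rewrite (@eval_occ0 t o2 Ht0) -(@eval_occ0 t o1 Ht0) -F1.
  move=> H; discriminate H.
- have S1 : size (eval s o1) = 0 by rewrite -E1.
  have S2 : size (eval s o2) = 0 by rewrite -E2.
  rewrite size_eval Hs1 mul1n in S1; rewrite size_eval Hs1 mul1n in S2.
  have h1 : o1 = [::] by apply: size0nil; move: S1; case: (size o1) => // ?; rewrite addnS.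
  have h2 : o2 = [::] by apply: size0nil; move: S2; case: (size o2) => // ?; rewrite addnS.
  move: F2; rewrite h2 -h1 -F1 => H; discriminate H.
Qed.

Lemma key (a b c d : seq A) j : up_m2 a b c d j ->
  (exists u v u' v' o o2, [/\ a = u++o++v, b = u'++o++v', c = u++o2++v & d = u'++o2++v'])
  \/ b = d.
Proof.
case: j => s t [[[Hs [Ht Hst]] [o1 /= [E1 F1]]] [_ [o2 /= [E2 F2]]]].
move: Ht; rewrite leq_eqVlt ltnS leqn0; case/orP=> /eqP /= Ht; simpl in Hs, Hst.
- have Hs1 : occ s = 1.
    by move: (Hst); rewrite Ht => /(_ erefl); case: (occ s) Hs => // [[|]].
  have [u [v Es]] := @eval_occ1 s Hs1.
  have [u' [v' Et]] := @eval_occ1 t Ht.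
  left; exists u, v, u', v', o1, o2.
  by rewrite E1 F1 E2 F2 !Es !Et.
- right; by rewrite F1 F2 (@eval_occ0 t o1 Ht) (@eval_occ0 t o2 Ht).
Qed.

Lemma arrow_dec (a1 a2 a3 b1 b2 b3 : seq A) (z : A) :
  arrow_m (a1++a2++a3) (b1++a2++b3) (a1++b2++a3) (b1++b2++b3).
Proof.
set j := (Cat (Cst a1) (Cat (@Var A) (Cst a3)), Cat (Cst b1) (Cat (@Var A) (Cst b3))).
have mj : monolinear j by [].
have Jd : up_m2 (a1++a2++a3) (b1++a2++b3) (a1++b2++a3) (b1++b2++b3) j.
  by split; split=> //; [exists a2 | exists b2].
right; split; first by exists j; split=> //; exact: (@no_trivial z j).
move=> d' H.
have [_ [_ [o [Ec Ed]]]] := H j Jd (no_trivial z j).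
move: Ec => /= /catsI_ /catIs_ Eo; subst o.
rewrite Ed /=; split; last by [].
by exists j; split=> //; exact: (@no_trivial z j).
Qed.

Lemma empty_nil (N : forall x : A, False) (s : seq A) : s = [::].
Proof. by case: s => // x; case: (N x). Qed.

Lemma empty_arrow (N : forall x : A, False) (a b c d : seq A) : arrow_m a b c d.
Proof.
left=> j H.
have mj : monolinear j by case: H => -[].
have U : forall a' b', up_m a' b' j.
  move=> a' b'; split=> //; exists [::]; split; [rewrite (empty_nil N a') (empty_nil N (eval j.1 [::])) // | rewrite (empty_nil N b') (empty_nil N (eval j.2 [::])) //].
by split=> // *; split; apply: U.
Qed.

End Aux.

Theorem mainTheorem12 (A : finType) (a b c d : seq A) :
  prop_m a b c d <->
  exists a1 a2 a3 b1 b2 b3 : seq A,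
    [/\ a = a1 ++ a2 ++ a3, b = b1 ++ a2 ++ b3,
        c = a1 ++ b2 ++ a3 & d = b1 ++ b2 ++ b3].
Proof.
case: (pickP (@predT A)) => [z _ | N]; last first.
  have N' : forall x : A, False by move=> x; move: (N x).
  split=> [_ | _].
    exists [::], [::], [::], [::], [::], [::].
    by rewrite !(@empty_nil _ N' a, @empty_nil _ N' b, @empty_nil _ N' c, @empty_nil _ N' d).
  by split; [|split; [|split]]; apply: (@empty_arrow _ N').
split.
- case=> H1 [H2 _].
  have get : forall a b c d : seq A, arrow_m a b c d ->
      (exists u v u' v' o o2, [/\ a = u++o++v, b = u'++o++v', c = u++o2++v & d = u'++o2++v'])
      \/ b = d.
    move=> a0 b0 c0 d0 [H | [[j [Hj _]] _]]; last exact: (@key _ _ _ _ _ _ Hj).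
    have [] := H (Cst a0, Cst b0) (or_introl (conj (conj (leq0n _) (conj (leq0n _) (fun h => h))) (ex_intro _ [::] (conj erefl erefl)))).
    by move=> m Tr; case: (@no_trivial _ z _ (conj m Tr)).
  case: (get _ _ _ _ H1) => [[u [v [u' [v' [o [o2 [-> -> -> ->]]]]]]] | Ebd].
    by exists u, o, v, u', o2, v'.
  case: (get _ _ _ _ H2) => [[u [v [u' [v' [o [o2 [-> -> -> ->]]]]]]] | Eac].
    by exists u', o, v', u, o2, v.
  exists a, [::], [::], b, [::], [::]; by rewrite -Eac -Ebd !cats0.
- case=> [a1 [a2 [a3 [b1 [b2 [b3 [-> -> -> ->]]]]]]].
  split; first exact: (@arrow_dec _ _ _ _ _ _ _ z).
  split; first exact: (@arrow_dec _ _ _ _ _ _ _ z).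
  split; first exact: (@arrow_dec _ _ _ _ _ _ _ z).
  exact: (@arrow_dec _ _ _ _ _ _ _ z).
Qed.
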